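(* Let $n\ge3$, $-2<l<0$, $1<p<\frac{n+2}{n-2}$, and let $f$ satisfy $(f_1)$, $(f_2)$, $(f_2')$. For $k>1$ and $\alpha>0$ let $r_{\alpha,k}=\inf\{r>0:u(r;\alpha)=\alpha/k\}$. Then $\lim_{\alpha\to0}r_{\alpha,k}=\infty$.
   Context: Standing hypotheses: $(f_1)$ $f\in C(0,\infty)$, $f(r)>0$ for $r>0$; $(f_2)$ $f(r)$ comparable to $r^l$ for large $r$, $-2<l<0$; $(f_2')$ $f(r)=O(r^\sigma)$ as $r\to0$, $\sigma>-2$. For $\alpha>0$, $u(r;\alpha)$ is the unique solution of (1.4) $u''+\frac{n-1}{r}u'+f(r)(u^+)^p=0$, $u(0;\alpha)=\alpha$, $u'(0;\alpha)=0$, $u^+=\max\{u,0\}$. *)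

(* Defs.v *)
From Stdlib Require Import Reals.
From Coquelicot Require Import Coquelicot.
Open Scope R_scope.

(* x^p for real p, extended by 0 for x <= 0 (used as (u^+)^p). *)
Definition pospow (x p : R) : R := if Rlt_dec 0 x then Rpower x p else 0.

Definition hyp_f1 (f : R -> R) : Prop :=
  forall r, 0 < r -> continuous f r /\ 0 < f r.

Definition hyp_f2 (l : R) (f : R -> R) : Prop :=
  exists c1 c2 R0, 0 < c1 /\ 0 < c2 /\ 0 < R0 /\
    forall r, R0 <= r -> c1 * Rpower r l <= f r <= c2 * Rpower r l.

Definition hyp_f2' (f : R -> R) : Prop :=
  exists sigma C delta, -2 < sigma /\ 0 < delta /\
    forall r, 0 < r < delta -> Rabs (f r) <= C * Rpower r sigma.

(* v is a (global, radial) solution of (1.4):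
   v'' + (n-1)/r v' + f(r) (v^+)^p = 0 on (0,oo), v(0) = alpha, v'(0) = 0.
   The initial condition v'(0)=0 is read as r^(n-1) v'(r) -> 0 as r -> 0+
   (equivalently, the usual integral-equation formulation). *)
Definition radial_solution (n : nat) (f : R -> R) (p alpha : R) (v : R -> R) : Prop :=
  v 0 = alpha /\
  filterlim v (at_right 0) (locally alpha) /\
  (forall r, 0 < r ->
     ex_derive v r /\ ex_derive (Derive v) r /\
     Derive (Derive v) r + (INR n - 1) / r * Derive v r + f r * pospow (v r) p = 0) /\
  filterlim (fun r => r ^ (n - 1) * Derive v r) (at_right 0) (locally 0).

(* r_{alpha,k} = inf { r > 0 : u(r;alpha) = alpha/k } in Rbar (inf of empty set = +oo). *)
Definition r_alpha_k (u : R -> R -> R) (k alpha : R) : Rbar :=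
  Glb_Rbar (fun r => 0 < r /\ u r alpha = alpha / k).

(* Main.v *)
Require Import Defs.
From Stdlib Require Import Reals Lra Lia.
From Coquelicot Require Import Coquelicot.
Open Scope R_scope.

Definition lim0 (g : R -> R) (L : R) : Prop :=
  forall eps, 0 < eps -> exists d, 0 < d /\ forall s, 0 < s < d -> Rabs (g s - L) < eps.

Lemma lim0_of_filterlim g L : filterlim g (at_right 0) (locally L) -> lim0 g L.
Proof.
  intros H eps Heps.
  destruct (proj1 (filterlim_locally g L) H (mkposreal eps Heps)) as [d Hd].
  exists d; split; [apply cond_pos|].
  intros s Hs. specialize (Hd s). 
  assert (B: ball 0 d s).
  { unfold ball; simpl; unfold AbsRing_ball, abs, minus, plus, opp; simpl.
    rewrite Rabs_right; lra. }
  specialize (Hd B (proj1 Hs)). revert Hd.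
  unfold ball; simpl; unfold AbsRing_ball, abs, minus, plus, opp; simpl. auto.
Qed.

Lemma lim0_plus g h a b : lim0 g a -> lim0 h b -> lim0 (fun x => g x + h x) (a + b).
Proof.
  intros Hg Hh eps He.
  destruct (Hg (eps/2)) as [d1 [P1 H1]]; [lra|].
  destruct (Hh (eps/2)) as [d2 [P2 H2]]; [lra|].
  exists (Rmin d1 d2); split; [apply Rmin_pos; lra|].
  intros s Hs. assert (s < d1) by (eapply Rlt_le_trans; [apply Hs| apply Rmin_l]).
  assert (s < d2) by (eapply Rlt_le_trans; [apply Hs| apply Rmin_r]).
  specialize (H1 s ltac:(lra)). specialize (H2 s ltac:(lra)).
  replace (g s + h s - (a + b)) with ((g s - a) + (h s - b)) by ring.
  eapply Rle_lt_trans; [apply Rabs_triang|]. lra.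
Qed.

Lemma lim0_scal g a c : lim0 g a -> lim0 (fun x => c * g x) (c * a).
Proof.
  intros Hg eps He.
  destruct (Hg (eps / (Rabs c + 1))) as [d [P H]].
  { apply Rdiv_lt_0_compat; [lra| pose proof (Rabs_pos c); lra]. }
  exists d; split; auto. intros s Hs. specialize (H s Hs).
  replace (c * g s - c * a) with (c * (g s - a)) by ring.
  rewrite Rabs_mult. pose proof (Rabs_pos c).
  apply Rle_lt_trans with ((Rabs c + 1) * Rabs (g s - a)).
  { apply Rmult_le_compat_r; [apply Rabs_pos| lra]. }
  replace eps with ((Rabs c + 1) * (eps / (Rabs c + 1))) by (field; lra).
  apply Rmult_lt_compat_l; lra.
Qed.

Lemma lim0_Rpower c : 0 < c -> lim0 (fun x => Rpower x c) 0.
Proof.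
  intros Hc eps He. exists (exp (ln eps / c)). split; [apply exp_pos|].
  intros s [Hs1 Hs2]. rewrite Rminus_0_r. unfold Rpower.
  rewrite Rabs_right by (left; apply exp_pos).
  rewrite <- (exp_ln eps) by lra. apply exp_increasing.
  assert (ln s < ln eps / c).
  { rewrite <- (ln_exp (ln eps / c)). apply ln_increasing; auto. }
  apply (Rmult_lt_compat_l c) in H; auto.
  replace (c * (ln eps / c)) with (ln eps) in H by (field; lra). lra.
Qed.

Lemma lim0_ext g h L : (forall x, 0 < x -> g x = h x) -> lim0 g L -> lim0 h L.
Proof.
  intros E H eps He. destruct (H eps He) as [d [Pd Hd]]. exists d; split; auto.
  intros s Hs. rewrite <- E by lra. auto.
Qed.

Lemma lim0_pow m : (0 < m)%nat -> lim0 (fun x => x ^ m) 0.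
Proof.
  intros Hm. apply (lim0_ext (fun x => Rpower x (INR m))).
  - intros; apply Rpower_pow; auto.
  - apply lim0_Rpower. apply lt_0_INR; auto.
Qed.

Lemma mono_lim (g d : R -> R) (L b : R) :
  (forall r, 0 < r <= b -> derivable_pt_lim g r (d r) /\ 0 <= d r) ->
  lim0 g L -> forall r, 0 < r <= b -> L <= g r.
Proof.
  intros Hd Hl r Hr.
  assert (Mono: forall s, 0 < s < r -> g s <= g r).
  { intros s Hs. destruct (MVT_cor2 g d s r) as [c [Hc1 Hc2]]; [lra| |].
    { intros c Hc. apply Hd; lra. }
    assert (0 <= d c) by (apply Hd; lra).
    assert (0 <= d c * (r - s)) by (apply Rmult_le_pos; lra). lra. }
  destruct (Rle_or_lt L (g r)) as [|Hlt]; auto.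
  destruct (Hl (L - g r)) as [e [He H]]; [lra|].
  set (s := Rmin (e/2) (r/2)).
  assert (0 < s) by (apply Rmin_pos; lra).
  assert (s <= e/2) by apply Rmin_l. assert (s <= r/2) by apply Rmin_r.
  specialize (H s ltac:(lra)). specialize (Mono s ltac:(lra)).
  apply Rabs_def2 in H. lra.
Qed.

Lemma mono_lim_dec (g d : R -> R) (L b : R) :
  (forall r, 0 < r <= b -> derivable_pt_lim g r (d r) /\ d r <= 0) ->
  lim0 g L -> forall r, 0 < r <= b -> g r <= L.
Proof.
  intros Hd Hl r Hr.
  assert (- L <= - g r); [|lra].
  apply (mono_lim (fun x => - g x) (fun x => - d x) (-L) b); auto.
  - intros x Hx. destruct (Hd x Hx) as [H1 H2]. split; [|lra].
    apply (derivable_pt_lim_opp g x (d x)) in H1. exact H1.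
  - apply (lim0_ext (fun x => -1 * g x)); [intros; ring|].
    replace (-L) with (-1 * L) by ring. apply lim0_scal; auto.
Qed.

Lemma pospow_nonneg x q : 0 <= pospow x q.
Proof. unfold pospow. destruct (Rlt_dec 0 x); [left; apply exp_pos| lra]. Qed.
Theorem lemma3p5 (n : nat) (l p : R) (f : R -> R) (u : R -> R -> R) (k : R) :
  (3 <= n)%nat ->
  -2 < l < 0 ->
  1 < p < (INR n + 2) / (INR n - 2) ->
  hyp_f1 f -> hyp_f2 l f -> hyp_f2' f ->
  (forall alpha, 0 < alpha -> radial_solution n f p alpha (fun r => u r alpha)) ->
  1 < k ->
  forall M : R, at_right 0 (fun alpha => Rbar_lt (Finite M) (r_alpha_k u k alpha)).
Proof.
  intros Hn Hl Hp Hf1 _ [sig [C [del [Hsig [Hdel HC]]]]] Hsol Hk M.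
  set (b := Rmax M 0 + 1).
  assert (Hb: 0 < b) by (unfold b; pose proof (Rmax_r M 0); lra).
  assert (HbM: M < b) by (unfold b; pose proof (Rmax_l M 0); lra).
  destruct (continuity_ab_maj f (del/2) (b + del)) as [xm [HB Hxm]]; [lra| |].
  { intros c Hc. apply continuity_pt_filterlim. apply Hf1. lra. }
  set (C' := Rabs C). set (B' := Rabs (f xm)).
  assert (HC' : 0 <= C') by apply Rabs_pos. assert (HB' : 0 <= B') by apply Rabs_pos.
  assert (Fb: forall r, 0 < r <= b -> f r <= C' * Rpower r sig + B').
  { intros r Hr. assert (0 < Rpower r sig) by apply exp_pos.
    assert (0 <= C' * Rpower r sig) by (apply Rmult_le_pos; lra).
    destruct (Rlt_or_le r del).
    - pose proof (HC r ltac:(lra)). pose proof (Rle_abs (f r)).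
      pose proof (Rle_abs C). unfold C', B'. pose proof (Rabs_pos (f xm)).
      assert (C * Rpower r sig <= Rabs C * Rpower r sig) by (apply Rmult_le_compat_r; lra). lra.
    - pose proof (HB r ltac:(lra)). pose proof (Rle_abs (f xm)). unfold B'. lra. }
  assert (Hn0: 3 <= INR n) by (replace 3 with (INR 3) by (simpl; ring); apply le_INR; auto).
  set (a1 := C' / (sig + INR n)). set (a2 := B' / INR n).
  assert (Ha1: 0 <= a1) by (unfold a1; apply Rmult_le_pos; [lra| left; apply Rinv_0_lt_compat; lra]).
  assert (Ha2: 0 <= a2) by (unfold a2; apply Rmult_le_pos; [lra| left; apply Rinv_0_lt_compat; lra]).
  set (K := a1 / (sig + 2) * Rpower b (sig + 2) + a2 / 2 * b ^ 2).
  assert (HK: 0 <= K).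
  { unfold K. apply Rplus_le_le_0_compat; apply Rmult_le_pos.
    - apply Rmult_le_pos; [lra| left; apply Rinv_0_lt_compat; lra].
    - left; apply exp_pos.
    - lra.
    - apply pow_le; lra. }
  set (eps := (1 - 1 / k) / (K + 1)).
  assert (Heps: 0 < eps).
  { unfold eps. apply Rdiv_lt_0_compat; [|lra].
    assert (1 / k < 1); [|lra]. apply (Rmult_lt_reg_r k); [lra|].
    unfold Rdiv; rewrite Rmult_assoc, Rinv_l; lra. }
  destruct (lim0_Rpower (p - 1) ltac:(lra) eps Heps) as [d0 [Hd0 Hpow]].
  exists (mkposreal d0 Hd0). intros alpha Hball Halpha.
  assert (Hal: alpha < d0).
  { revert Hball. unfold ball; simpl; unfold AbsRing_ball, abs, minus, plus, opp; simpl.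
    rewrite Rabs_right; lra. }
  clear Hball. simpl in Halpha.
  assert (Key: forall r, 0 < r <= b -> alpha / k < u r alpha).
  { set (v := fun r => u r alpha).
    destruct (Hsol alpha Halpha) as [Hv0 [Hvlim [Hode HP0]]]. fold v in Hv0, Hvlim, Hode, HP0.
    set (m := (n - 1)%nat).
    assert (Hm: n = S m) by (unfold m; lia).
    assert (Hm2: m = S (pred m)) by (unfold m; lia).
    assert (HINRm: INR m = INR n - 1) by (rewrite Hm, S_INR; ring).
    set (A := Rpower alpha p).
    assert (HA: 0 < A) by apply exp_pos.
    assert (Dv: forall r, 0 < r -> derivable_pt_lim v r (Derive v r)).
    { intros r Hr. apply is_derive_Reals. apply Derive_correct. apply (Hode r Hr). }
    assert (DDv: forall r, 0 < r -> derivable_pt_lim (Derive v) r (Derive (Derive v) r)).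
    { intros r Hr. apply is_derive_Reals. apply Derive_correct. apply (Hode r Hr). }
    set (P := fun x => x ^ m * Derive v x).
    assert (DP: forall r, 0 < r -> derivable_pt_lim P r (- (r ^ m * f r * pospow (v r) p))).
    { intros r Hr.
      pose proof (derivable_pt_lim_mult (fun x => x ^ m) (Derive v) r _ _
        (derivable_pt_lim_pow r m) (DDv r Hr)) as H.
      unfold mult_fct in H. unfold P.
      replace (- (r ^ m * f r * pospow (v r) p)) with
        (INR m * r ^ Init.Nat.pred m * Derive v r + r ^ m * Derive (Derive v) r); [exact H|].
      destruct (Hode r Hr) as [_ [_ HE]]. change (u r alpha) with (v r) in HE.
      assert (E2: Derive (Derive v) r = - ((INR n - 1) / r * Derive v r) - f r * pospow (v r) p).
 { lra. }
      rewrite E2, HINRm. rewrite Hm2 at 2 3. simpl. field. apply Rgt_not_eq; lra. }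
    assert (Hrm: forall r, 0 < r -> 0 < r ^ m) by (intros; apply pow_lt; auto).
    assert (Pneg: forall r, 0 < r -> P r <= 0).
    { intros r Hr.
      apply (mono_lim_dec P (fun x => -(x ^ m * f x * pospow (v x) p)) 0 r);
        [| apply lim0_of_filterlim; exact HP0| lra].
      intros x Hx; split; [apply DP; lra|].
      pose proof (Hrm x ltac:(lra)). pose proof (proj2 (Hf1 x ltac:(lra))).
      pose proof (pospow_nonneg (v x) p).
      assert (0 <= x ^ m * f x * pospow (v x) p); [|lra].
      apply Rmult_le_pos; [apply Rmult_le_pos|]; lra. }
    assert (vle: forall r, 0 < r -> v r <= alpha).
    { intros r Hr.
      apply (mono_lim_dec v (Derive v) alpha r); [| apply lim0_of_filterlim; exact Hvlim| lra].
      intros x Hx; split; [apply Dv; lra|].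
      destruct (Rle_or_lt (Derive v x) 0) as [|Hlt]; auto.
      pose proof (Pneg x ltac:(lra)). unfold P in H.
      pose proof (Rmult_lt_0_compat _ _ (Hrm x ltac:(lra)) Hlt). lra. }
    assert (ppA: forall r, 0 < r -> pospow (v r) p <= A).
    { intros r Hr. unfold pospow. destruct (Rlt_dec 0 (v r)).
      - apply Rle_Rpower_l; [lra|]. split; auto.
      - lra. }
    assert (HsnP: 0 < sig + INR n) by lra.
    set (E := fun x => A * (a1 * Rpower x (sig + INR n) + a2 * x ^ n)).
    assert (DE: forall r, 0 < r -> derivable_pt_lim E r (A * (r ^ m * (C' * Rpower r sig + B')))).
    { intros r Hr.
      pose proof (derivable_pt_lim_power r (sig + INR n) Hr) as H1.
      pose proof (derivable_pt_lim_pow r n) as H2.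
      pose proof (derivable_pt_lim_scal _ a1 r _ H1) as H3.
      pose proof (derivable_pt_lim_scal _ a2 r _ H2) as H4.
      pose proof (derivable_pt_lim_plus _ _ r _ _ H3 H4) as H5.
      pose proof (derivable_pt_lim_scal _ A r _ H5) as H6.
      match type of H6 with derivable_pt_lim _ _ ?L => replace (A * (r ^ m * (C' * Rpower r sig + B'))) with L end;
        [exact H6|].
      replace (sig + INR n - 1) with (sig + INR m) by lra.
      rewrite Rpower_plus, Rpower_pow by auto.
      replace (Init.Nat.pred n) with m by lia.
      unfold a1, a2. field. split; apply Rgt_not_eq; lra. }
    assert (limE: lim0 E 0).
    { replace 0 with (A * (a1 * 0 + a2 * 0)) by ring. unfold E.
      apply lim0_scal. apply lim0_plus; apply lim0_scal.
      - apply lim0_Rpower; lra.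
      - apply lim0_pow; lia. }
    assert (Qpos: forall r, 0 < r <= b -> 0 <= P r + E r).
    { intros r Hr.
      apply (mono_lim (fun x => P x + E x)
        (fun x => - (x ^ m * f x * pospow (v x) p) + A * (x ^ m * (C' * Rpower x sig + B'))) 0 b);
        [| | exact Hr].
      - intros x Hx. split; [apply derivable_pt_lim_plus; [apply DP|apply DE]; lra|].
        pose proof (Hrm x ltac:(lra)). pose proof (proj2 (Hf1 x ltac:(lra))).
        pose proof (ppA x ltac:(lra)). pose proof (Fb x Hx).
        pose proof (pospow_nonneg (v x) p).
        assert (f x * pospow (v x) p <= (C' * Rpower x sig + B') * A).
        { apply Rle_trans with (f x * A). apply Rmult_le_compat_l; lra.
          apply Rmult_le_compat_r; lra. }
        assert (x ^ m * (f x * pospow (v x) p) <= x ^ m * ((C' * Rpower x sig + B') * A))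
          by (apply Rmult_le_compat_l; lra).
        nra.
      - replace 0 with (0 + 0) by ring. apply lim0_plus; auto.
        apply lim0_of_filterlim; exact HP0. }
    assert (Dvlow: forall r, 0 < r <= b -> 0 <= Derive v r + A * (a1 * Rpower r (sig + 1) + a2 * r)).
    { intros r Hr. pose proof (Qpos r Hr) as Q. unfold P, E in Q.
      replace (sig + INR n) with (sig + 1 + INR m) in Q by lra.
      rewrite Rpower_plus, Rpower_pow in Q by lra.
      rewrite Hm in Q. simpl pow in Q.
      pose proof (Hrm r ltac:(lra)).
      destruct (Rle_or_lt 0 (Derive v r + A * (a1 * Rpower r (sig + 1) + a2 * r))) as [|Hlt]; auto.
      assert (r ^ m * (Derive v r + A * (a1 * Rpower r (sig + 1) + a2 * r)) < r ^ m * 0)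
        by (apply Rmult_lt_compat_l; lra).
      nra. }
    set (G := fun x => v x + A * (a1 / (sig + 2) * Rpower x (sig + 2) + a2 / 2 * x ^ 2)).
    assert (Gge: forall r, 0 < r <= b -> alpha <= G r).
    { intros r Hr.
      apply (mono_lim G (fun x => Derive v x + A * (a1 * Rpower x (sig + 1) + a2 * x)) alpha b);
        [| | exact Hr].
      - intros x Hx. split; [|apply Dvlow; auto].
        pose proof (derivable_pt_lim_power x (sig + 2) ltac:(lra)) as H1.
        pose proof (derivable_pt_lim_pow x 2) as H2.
        pose proof (derivable_pt_lim_scal _ (a1 / (sig + 2)) x _ H1) as H3.
        pose proof (derivable_pt_lim_scal _ (a2 / 2) x _ H2) as H4.
        pose proof (derivable_pt_lim_plus _ _ x _ _ H3 H4) as H5.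
        pose proof (derivable_pt_lim_scal _ A x _ H5) as H6.
        pose proof (derivable_pt_lim_plus _ _ x _ _ (Dv x ltac:(lra)) H6) as H7.
        match type of H7 with derivable_pt_lim _ _ ?L => replace (Derive v x + A * (a1 * Rpower x (sig + 1) + a2 * x)) with L end;
          [exact H7|].
        replace (sig + 2 - 1) with (sig + 1) by ring. simpl. field. apply Rgt_not_eq; lra.
      - replace alpha with (alpha + A * (a1 / (sig + 2) * 0 + a2 / 2 * 0)) at 1 by ring.
        unfold G. apply lim0_plus; [apply lim0_of_filterlim; exact Hvlim|].
        apply lim0_scal. apply lim0_plus; apply lim0_scal.
        + apply lim0_Rpower; lra.
        + apply lim0_pow; lia. }
    intros r Hr. pose proof (Gge r Hr) as Hg. unfold G in Hg.
    assert (Kr: a1 / (sig + 2) * Rpower r (sig + 2) + a2 / 2 * r ^ 2 <= K).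
    { unfold K. apply Rplus_le_compat; apply Rmult_le_compat_l.
      - apply Rmult_le_pos; [lra| left; apply Rinv_0_lt_compat; lra].
      - apply Rle_Rpower_l; lra.
      - lra.
      - apply pow_incr; lra. }
    set (Pw := Rpower alpha (p - 1)).
    assert (HPw: 0 < Pw) by apply exp_pos.
    assert (HPe: Pw < eps).
    { pose proof (Hpow alpha ltac:(lra)) as H. rewrite Rminus_0_r, Rabs_right in H; [exact H| left; apply exp_pos]. }
    assert (HAe: A = alpha * Pw).
    { unfold A, Pw. replace p with (1 + (p - 1)) at 1 by ring.
      rewrite Rpower_plus, Rpower_1; auto. }
    assert (A * (a1 / (sig + 2) * Rpower r (sig + 2) + a2 / 2 * r ^ 2) <= A * K)
      by (apply Rmult_le_compat_l; lra).
    assert (Pw * K < 1 - 1 / k).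
    { apply Rle_lt_trans with (Pw * (K + 1)); [apply Rmult_le_compat_l; lra|].
      replace (1 - 1 / k) with (eps * (K + 1)) by (unfold eps; field; lra).
      apply Rmult_lt_compat_r; lra. }
    assert (alpha * (Pw * K) < alpha * (1 - 1 / k)) by (apply Rmult_lt_compat_l; lra).
    change (u r alpha) with (v r).
    assert (alpha / k = alpha * (1 / k)) by (field; lra).
    rewrite HAe in *. nra. }
  unfold r_alpha_k.
  destruct (Glb_Rbar_correct (fun r => 0 < r /\ u r alpha = alpha / k)) as [_ Hglb].
  assert (Hle: Rbar_le b (Glb_Rbar (fun r => 0 < r /\ u r alpha = alpha / k))).
  { apply Hglb. intros x [Hx1 Hx2]. simpl.
    destruct (Rle_or_lt x b) as [Hxb|Hxb]; [|lra].
    specialize (Key x (conj Hx1 Hxb)). lra. }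
  destruct (Glb_Rbar _) as [g| |]; simpl in *; lra.
Qed.
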